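(* Let $\bigl((A_n)_{n\in\mathbb{N}},(\alpha_{m,n})_{m\ge n}\bigr)$ be a direct system of C*-algebras. Suppose that for $n=2,3,\ldots$ we are given $\gamma_n\in\operatorname{Aut}(A_n)$. Suppose furthermore that for all $k,m\in\mathbb{N}$ with $m\ge k>1$ there is $\beta_m^{(k)}\in\operatorname{Aut}(A_m)$ such that: (1) for $m=2,3,\ldots$, $\beta_m^{(m)}=\gamma_m$; (2) for $m=2,3,\ldots$ and $k=2,3,\ldots,m-1$, $\beta_m^{(k)}\circ\alpha_{m,m-1}=\alpha_{m,m-1}\circ\beta_{m-1}^{(k)}$. Then $\varinjlim\bigl((A_n)_{n\in\mathbb{N}},(\alpha_{n+1,n})_{n\in\mathbb{N}}\bigr)\cong\varinjlim\bigl((A_n)_{n\in\mathbb{N}},(\gamma_{n+1}\circ\alpha_{n+1,n})_{n\in\mathbb{N}}\bigr).$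
   Context: Direct systems are indexed by $\mathbb{N}$; $\alpha_{n,m}=\alpha_{n,n-1}\circ\cdots\circ\alpha_{m+1,m}$ for $n\ge m$. *)

(* Defs.v *)
From HB Require Import structures.
From mathcomp Require Import all_boot all_order all_algebra.
From mathcomp Require Import reals complex.
Set Implicit Arguments. Unset Strict Implicit. Unset Printing Implicit Defensive.
Import Order.TTheory GRing.Theory Num.Theory.
Local Open Scope ring_scope.

Record cstar (R : realType) := CStar {
  cs_V :> lmodType R[i];
  cs_mul : cs_V -> cs_V -> cs_V;
  cs_star : cs_V -> cs_V;
  cs_norm : cs_V -> R;
  cs_mulA : forall x y z, cs_mul x (cs_mul y z) = cs_mul (cs_mul x y) z;
  cs_mulDl : forall x y z, cs_mul (x + y) z = cs_mul x z + cs_mul y z;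
  cs_mulDr : forall x y z, cs_mul x (y + z) = cs_mul x y + cs_mul x z;
  cs_mulZl : forall (c : R[i]) x y, cs_mul (c *: x) y = c *: cs_mul x y;
  cs_mulZr : forall (c : R[i]) x y, cs_mul x (c *: y) = c *: cs_mul x y;
  cs_starK : forall x, cs_star (cs_star x) = x;
  cs_starD : forall x y, cs_star (x + y) = cs_star x + cs_star y;
  cs_starZ : forall (c : R[i]) x, cs_star (c *: x) = (conjc c) *: cs_star x;
  cs_starM : forall x y, cs_star (cs_mul x y) = cs_mul (cs_star y) (cs_star x);
  cs_norm_eq0 : forall x, cs_norm x = 0 -> x = 0;
  cs_normD : forall x y, cs_norm (x + y) <= cs_norm x + cs_norm y;
  cs_normZ : forall (c : R[i]) x, cs_norm (c *: x) = Normc.normc c * cs_norm x;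
  cs_normM : forall x y, cs_norm (cs_mul x y) <= cs_norm x * cs_norm y;
  cs_cstar : forall x, cs_norm (cs_mul (cs_star x) x) = cs_norm x ^+ 2;
  cs_complete : forall u : nat -> cs_V,
    (forall e : R, 0 < e -> exists N, forall m n, (N <= m)%N -> (N <= n)%N ->
       cs_norm (u m - u n) < e) ->
    exists l, forall e : R, 0 < e -> exists N, forall n, (N <= n)%N ->
       cs_norm (u n - l) < e
}.

Definition is_starhom (R : realType) (A B : cstar R) (f : A -> B) : Prop :=
  [/\ forall x y, f (x + y) = f x + f y,
      forall (c : R[i]) x, f (c *: x) = c *: f x,
      forall x y, f (cs_mul x y) = cs_mul (f x) (f y)
    & forall x, f (cs_star x) = cs_star (f x)].

Definition is_stariso (R : realType) (A B : cstar R) (f : A -> B) : Prop :=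
  is_starhom f /\ bijective f.

(* Indices are natural numbers starting at 1. *)
Definition is_ind_limit (R : realType) (A : nat -> cstar R)
  (phi : forall n, A n -> A n.+1) (L : cstar R) (mu : forall n, A n -> L) : Prop :=
  (forall n, (1 <= n)%N -> is_starhom (mu n)) /\
  (forall n, (1 <= n)%N -> forall x, mu n.+1 (phi n x) = mu n x) /\
  (forall (B : cstar R) (nu : forall n, A n -> B),
     (forall n, (1 <= n)%N -> is_starhom (nu n)) ->
     (forall n, (1 <= n)%N -> forall x, nu n.+1 (phi n x) = nu n x) ->
     exists h : L -> B,
       [/\ is_starhom h,
           (forall n, (1 <= n)%N -> forall x, h (mu n x) = nu n x)
         & forall h' : L -> B, is_starhom h' ->
             (forall n, (1 <= n)%N -> forall x, h' (mu n x) = nu n x) ->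
             forall y, h' y = h y]).

(* Main.v *)
Require Import Defs.
From HB Require Import structures.
From mathcomp Require Import all_boot all_order all_algebra.
From mathcomp Require Import reals complex.
From Stdlib Require Import ClassicalEpsilon.
Local Open Scope ring_scope.

Section Helpers.
Set Implicit Arguments.
Variable R : realType.

Lemma sh_id (A : cstar R) : is_starhom (fun x : A => x).
Proof. by split. Qed.

Lemma sh_comp (A B C : cstar R) (f : A -> B) (g : B -> C) :
  is_starhom f -> is_starhom g -> is_starhom (fun x => g (f x)).
Proof.
case=> fa fz fm fs [ga gz gm gs]; split=> *.
- by rewrite fa ga.
- by rewrite fz gz.
- by rewrite fm gm.
- by rewrite fs gs.
Qed.

Lemma sh_inv (A B : cstar R) (f : A -> B) (g : B -> A) :
  is_starhom f -> cancel f g -> cancel g f -> is_starhom g.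
Proof.
case=> fa fz fm fs fK gK; have fI := can_inj fK; split=> *; apply: fI.
- by rewrite fa !gK.
- by rewrite fz !gK.
- by rewrite fm !gK.
- by rewrite fs !gK.
Qed.

Lemma si_comp (A B C : cstar R) (f : A -> B) (g : B -> C) :
  is_stariso f -> is_stariso g -> is_stariso (fun x => g (f x)).
Proof.
case=> hf bf [hg bg]; split; first exact: sh_comp.
exact: (bij_comp bg bf).
Qed.

Variable A : nat -> cstar R.
Variable beta : forall m : nat, nat -> A m -> A m.

Fixpoint dl (n j : nat) (x : A n) : A n :=
  match j with 0 => x | j'.+1 => beta n j'.+2 (dl n j' x) end.

End Helpers.

(* Indices: A n for n >= 1 (A 0 is unused); alpha n = alpha_{n+1,n}. *)
Theorem lemma2p3 (R : realType) (A : nat -> cstar R)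
  (alpha : forall n, A n -> A n.+1)
  (halpha : forall n, (1 <= n)%N -> is_starhom (alpha n))
  (gamma : forall n, A n -> A n)
  (hgamma : forall n, (2 <= n)%N -> is_stariso (gamma n))
  (beta : forall m : nat, nat -> A m -> A m)
  (hbeta : forall m k, (2 <= k)%N -> (k <= m)%N -> is_stariso (beta m k))
  (h1 : forall m, (2 <= m)%N -> forall x, beta m m x = gamma m x)
  (h2 : forall m k, (2 <= k)%N -> (k <= m)%N -> forall x : A m,
          beta m.+1 k (alpha m x) = alpha m (beta m k x))
  (L1 L2 : cstar R) (mu1 : forall n, A n -> L1) (mu2 : forall n, A n -> L2) :
  @is_ind_limit R A alpha L1 mu1 ->
  @is_ind_limit R A (fun n x => gamma n.+1 (alpha n x)) L2 mu2 ->
  exists f : L1 -> L2, is_stariso f.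
Proof.
pose delta n := @dl R A beta n n.-1.
have dI : forall n j, (j <= n.-1)%N -> is_stariso (@dl R A beta n j).
  move=> n; elim=> [|j IH] hj /=.
    by split; [exact: sh_id | exists id].
  apply: (@si_comp R (A n) (A n) (A n) _ (beta n j.+2) (IH (ltnW hj))); apply: hbeta => //.
  by move: hj; case: (n) => //.
have dC : forall n j, (j <= n.-1)%N -> forall x,
    @dl R A beta n.+1 j (alpha n x) = alpha n (@dl R A beta n j x).
  move=> n; elim=> [|j IH] hj x //=.
  rewrite IH ?(ltnW hj) // h2 //.
  by move: hj; case: (n) => //.
have dS : forall n, (1 <= n)%N -> forall x,
    delta n.+1 (alpha n x) = gamma n.+1 (alpha n (delta n x)).
  case=> // m _ x; rewrite /delta /= h1 // dC //.
have inv : forall n, {g : A n -> A n | cancel (delta n) g /\ cancel g (delta n)}.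
  move=> n; apply: constructive_indefinite_description.
  by case: (dI n n.-1 (leqnn _)) => _ [g ? ?]; exists g.
pose dinv n := proj1_sig (inv n).
have dK n : cancel (delta n) (dinv n) by rewrite /dinv; case: (inv n) => ? [].
have dKV n : cancel (dinv n) (delta n) by rewrite /dinv; case: (inv n) => ? [].
have dH n : is_starhom (delta n) by case: (dI n n.-1 (leqnn _)).
have dVH n : is_starhom (dinv n) by apply: (sh_inv (dH n) (dK n) (dKV n)).
case=> hm1 [cm1 U1] [hm2 [cm2 U2]].
have c2 : forall n, (1 <= n)%N -> forall x,
    mu2 n.+1 (delta n.+1 (alpha n x)) = mu2 n (delta n x).
  by move=> n hn x; rewrite dS // cm2.
have [f [fH fE _]] := U1 L2 (fun n x => mu2 n (delta n x))
  (fun n hn => sh_comp (dH n) (hm2 n hn)) c2.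
have c1 : forall n, (1 <= n)%N -> forall x,
    mu1 n.+1 (dinv n.+1 (gamma n.+1 (alpha n x))) = mu1 n (dinv n x).
  move=> n hn x.
  by rewrite -{1}(dKV n x) -dS // dK cm1.
have [g [gH gE _]] := U2 L1 (fun n x => mu1 n (dinv n x))
  (fun n hn => sh_comp (dVH n) (hm1 n hn)) c1.
have [h [_ _ hU1]] := U1 L1 mu1 hm1 cm1.
have [k [_ _ hU2]] := U2 L2 mu2 hm2 cm2.
exists f; split => //; exists g => y.
- rewrite (hU1 (fun y => g (f y)) (sh_comp fH gH)); last first.
    by move=> n hn x /=; rewrite fE // gE // dK.
  by rewrite -(hU1 (fun y => y) (@sh_id R L1) (fun n _ x => erefl) y).
- rewrite (hU2 (fun y => f (g y)) (sh_comp gH fH)); last first.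
    by move=> n hn x /=; rewrite gE // fE // dKV.
  by rewrite -(hU2 (fun y => y) (@sh_id R L2) (fun n _ x => erefl) y).
Qed.
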